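(* Let $n_h\ge1$, $n_o\ge 2$, $n=n_o+n_h-1$, and let $A^{m(n)T}$, $G^{m(n)}$, $B^{m(n)T}$ be the modified Toom-Cook matrices built from $A^{(n-1)T}$, $G^{(n-1)}$, $B^{(n-1)T}$ as in the context. For $h\in F^{n_h}$, $x\in F^n$ let $s^{m(n)}=A^{m(n)T}(G^{m(n)}h\odot B^{m(n)T}x)$ be the exact value, $\hat s^{m(n)}$ the floating point value computed as in the context, and $x^{(n-1)}=(x_1,\dots,x_{n-1})^T$. Then for $q=1,\dots,n_o-1$, $$|\hat s^{m(n)}_q-s^{m(n)}_q|\le |A^{(n-1)T}_{q,:}|\big(|G^{(n-1)}|\,|h|\odot|B^{(n-1)T}|\,|x^{(n-1)}|\big)\big(\gamma^{(n_h)}+\beta^{(n-1)}+\alpha^{(n-1)}+1\big)\varepsilon+O(\varepsilon^2),$$ and for $q=n_o$, $$|\hat s^{m(n)}_{n_o}-s^{m(n)}_{n_o}|\le\Big(|A^{(n-1)T}_{n_o,:}|\big(|G^{(n-1)}|\,|h|\odot|B^{(n-1)T}|\,|x^{(n-1)}|\big)+|h_{n_h}|\,|B^{m(n)T}_{n,:}|\,|x|\Big)\Big(\max\{\gamma^{(n_h)}+\beta^{(n-1)}+\alpha^{(n-1)}+1,\ \beta^{(n)}+1\}+1\Big)\varepsilon+O(\varepsilon^2).$$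
   Context: Let $p_1,\dots,p_{n-1}$ be distinct reals, $N_i=1/\prod_{j\ne i,\,j\le n-1}(p_i-p_j)$, $M_{i,j}$ the coefficient of $a^{j-1}$ in $\prod_{k\ne i,\,k\le n-1}(a-p_k)$, and $M_j$ ($j=1,\dots,n$) the coefficient of $a^{j-1}$ in $\prod_{k=1}^{n-1}(a-p_k)$ (so $M_n=1$). Define $A^{(n-1)T}\in\mathbb{R}^{n_o\times(n-1)}$ by $A^{(n-1)T}_{i,j}=p_j^{i-1}$, $G^{(n-1)}\in\mathbb{R}^{(n-1)\times n_h}$ by $G^{(n-1)}_{i,j}=p_i^{j-1}N_i$, $B^{(n-1)T}\in\mathbb{R}^{(n-1)\times(n-1)}$ by $B^{(n-1)T}_{i,j}=M_{j,i}$. The modified matrices are: $G^{m(n)}\in\mathbb{R}^{n\times n_h}$ equals $G^{(n-1)}$ with an appended last row $(0,\dots,0,1)$; $A^{m(n)T}\in\mathbb{R}^{n_o\times n}$ equals $A^{(n-1)T}$ with an appended last column $(0,\dots,0,1)^T$; $B^{m(n)T}\in\mathbb{R}^{n\times n}$ has upper-left block $B^{(n-1)T}$, last column zero in rows $1,\dots,n-1$, and last row $(M_1,\dots,M_n)$. $M_{q,:}$ denotes row $q$ of a matrix $M$. Floating point model: set $F$, unit roundoff $\varepsilon$, no overflow, $fl(y\,\mathrm{op}\,z)=(y\,\mathrm{op}\,z)(1+\delta)$, $fl(y)=y(1+\delta)$, $|\delta|\le\varepsilon$; matrix entries stored rounded. Computation: $u=fl(fl(G^{(n-1)})h)$, $v=fl(fl(B^{(n-1)T})x^{(n-1)})$,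 $w_i=fl(u_iv_i)$ ($i\le n-1$); for $q<n_o$, $\hat s^{m(n)}_q=fl(fl(A^{(n-1)T}_{q,:})w)$; for $q=n_o$, $\hat s^{m(n)}_{n_o}=fl\big(fl(fl(A^{(n-1)T}_{n_o,:})w)+fl(h_{n_h}\,fl(fl(B^{m(n)T}_{n,:})x))\big)$ (structural zeros and ones are not multiplied). Constants: $\gamma^{(n_h)}$, $\beta^{(n-1)}$, $\alpha^{(n-1)}$, $\beta^{(n)}$ are such that for every row $a^T$ of $G^{(n-1)}$, of $B^{(n-1)T}$, of $A^{(n-1)T}$, and for the row $B^{m(n)T}_{n,:}$ respectively, and every floating point vector $y$ of matching length, $|a^Ty-fl(fl(a^T)y)|\le |a^T||y|\,c\,\varepsilon+O(\varepsilon^2)$ with the respective $c$. $|\cdot|$ is entrywise absolute value, $\odot$ the Hadamard product. *)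

(* Defs.v *)
From HB Require Import structures.
From mathcomp Require Import all_boot all_order all_algebra.
Set Implicit Arguments. Unset Strict Implicit. Unset Printing Implicit Defensive.
Import Order.TTheory GRing.Theory Num.Theory.
Local Open Scope ring_scope.

(* Points p_1..p_{m} with m = n-1, indexed by 'I_m (0-based). *)

Definition TC_N (R : fieldType) (m : nat) (p : 'I_m -> R) (i : 'I_m) : R :=
  (\prod_(j < m | j != i) (p i - p j))^-1.

(* prod_{k<>i} (a - p_k) ; its coefficient of a^j (0-based) is M_{i+1,j+1} *)
Definition TC_Mi (R : fieldType) (m : nat) (p : 'I_m -> R) (i : 'I_m) : {poly R} :=
  \prod_(k < m | k != i) ('X - (p k)%:P).

(* prod_k (a - p_k) ; its coefficient of a^j (0-based) is M_{j+1} *)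
Definition TC_Mfull (R : fieldType) (m : nat) (p : 'I_m -> R) : {poly R} :=
  \prod_(k < m) ('X - (p k)%:P).

Definition TC_AT (R : fieldType) (no m : nat) (p : 'I_m -> R) : 'M[R]_(no, m) :=
  \matrix_(i < no, j < m) p j ^+ i.

Definition TC_G (R : fieldType) (nh m : nat) (p : 'I_m -> R) : 'M[R]_(m, nh) :=
  \matrix_(i < m, j < nh) (p i ^+ j * TC_N p i).

Definition TC_BT (R : fieldType) (m : nat) (p : 'I_m -> R) : 'M[R]_m :=
  \matrix_(i < m, j < m) (TC_Mi p j)`_i.

(* A^{m(n)T}: A^{(n-1)T} with appended last column (0,...,0,1)^T *)
Definition TC_ATm (R : fieldType) (no m : nat) (p : 'I_m -> R) : 'M[R]_(no, m.+1) :=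
  \matrix_(i < no, j < m.+1)
    match unlift ord_max j with
    | Some j' => TC_AT no p i j'
    | None => (((i : nat) == no.-1) : nat)%:R
    end.

(* G^{m(n)}: G^{(n-1)} with appended last row (0,...,0,1) *)
Definition TC_Gm (R : fieldType) (nh m : nat) (p : 'I_m -> R) : 'M[R]_(m.+1, nh) :=
  \matrix_(i < m.+1, j < nh)
    match unlift ord_max i with
    | Some i' => TC_G nh p i' j
    | None => (((j : nat) == nh.-1) : nat)%:R
    end.

(* B^{m(n)T}: upper-left block B^{(n-1)T}, last column zero in rows 1..n-1,
   last row (M_1, ..., M_n) *)
Definition TC_BTm (R : fieldType) (m : nat) (p : 'I_m -> R) : 'M[R]_(m.+1) :=
  \matrix_(i < m.+1, j < m.+1)
    match unlift ord_max i, unlift ord_max j with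
    | Some i', Some j' => TC_BT p i' j'
    | Some _, None => 0
    | None, _ => (TC_Mfull p)`_j
    end.

Definition hadc (R : pzRingType) (k : nat) (a b : 'cV[R]_k) : 'cV[R]_k :=
  \col_i (a i 0 * b i 0).

Definition TC_exact (R : fieldType) (no nh m : nat) (p : 'I_m -> R)
    (h : 'cV[R]_nh) (x : 'cV[R]_(m.+1)) : 'cV[R]_no :=
  TC_ATm no p *m hadc (TC_Gm nh p *m h) (TC_BTm p *m x).

Definition xtrunc (R : Type) (m : nat) (x : 'cV[R]_(m.+1)) : 'cV[R]_m :=
  \col_i x (widen_ord (leqnSn m) i) 0.

Definition absm (R : numDomainType) (k l : nat) (A : 'M[R]_(k, l)) : 'M[R]_(k, l) :=
  map_mx (fun a => `|a|) A.

(* The floating point dot product  fl(fl(a^T) y)  is modelled by an abstract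
   function fdot (its algorithm is left unspecified, as in the paper: only
   the error constants are used). *)
Definition fdot_type (R : Type) := forall k : nat, 'rV[R]_k -> 'cV[R]_k -> R.

Definition TC_w (R : fieldType) (fdot : fdot_type R) (fl_mul : R -> R -> R)
    (nh m : nat) (p : 'I_m -> R) (h : 'cV[R]_nh) (x : 'cV[R]_(m.+1)) : 'cV[R]_m :=
  \col_i fl_mul (fdot _ (row i (TC_G nh p)) h) (fdot _ (row i (TC_BT p)) (xtrunc x)).

(* hat s^{m(n)}_q  (hl is the index n_h, i.e. value nh-1 in 0-based 'I_nh) *)
Definition TC_shat (R : fieldType) (fdot : fdot_type R) (fl_mul fl_add : R -> R -> R)
    (no nh m : nat) (p : 'I_m -> R) (h : 'cV[R]_nh) (x : 'cV[R]_(m.+1))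
    (hl : 'I_nh) (q : 'I_no) : R :=
  let w := TC_w fdot fl_mul p h x in
  if ((q : nat) < no.-1)%N then fdot _ (row q (TC_AT no p)) w
  else fl_add (fdot _ (row q (TC_AT no p)) w)
              (fl_mul (h hl 0) (fdot _ (row ord_max (TC_BTm p)) x)).

Definition dot_err_bound (R : numDomainType) (F : R -> Prop) (fdot : fdot_type R)
    (eps K c : R) (k : nat) (a : 'rV[R]_k) : Prop :=
  forall y : 'cV[R]_k, (forall j, F (y j 0)) ->
    `|(a *m y) 0 0 - fdot k a y| <= (absm a *m absm y) 0 0 * (c * eps + K * eps ^+ 2).

Definition TC_mainterm (R : realFieldType) (no nh m : nat) (p : 'I_m -> R)
    (h : 'cV[R]_nh) (x : 'cV[R]_(m.+1)) (q : 'I_no) : R :=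
  (absm (row q (TC_AT no p)) *m
     hadc (absm (TC_G nh p) *m absm h) (absm (TC_BT p) *m absm (xtrunc x))) 0 0.

(* Main.v *)
Require Import Defs.
From HB Require Import structures.
From mathcomp Require Import all_boot all_order all_algebra.
Import Order.TTheory GRing.Theory Num.Theory.
Local Open Scope ring_scope.
From mathcomp Require Import ring lra.
Set Implicit Arguments. Unset Strict Implicit.

Definition good (R : realFieldType) (eps a C x : R) :=
  [/\ 0 <= a, 0 <= C, 0 <= x & x <= a * eps + C * eps ^+ 2].

Lemma good_eps (R : realFieldType) (eps : R) : 0 <= eps -> good eps 1 0 eps.
Proof. by move=> e0; split=> //; rewrite mul1r mul0r addr0. Qed.

Lemma good_lin (R : realFieldType) (eps c K : R) : 0 <= eps -> 0 <= c -> 0 <= K ->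
  good eps c K (c * eps + K * eps ^+ 2).
Proof. by move=> e0 c0 K0; split=> //; rewrite addr_ge0 ?mulr_ge0 ?exprn_ge0. Qed.

Lemma good_add (R : realFieldType) (eps a1 C1 x a2 C2 y : R) :
  good eps a1 C1 x -> good eps a2 C2 y -> good eps (a1 + a2) (C1 + C2) (x + y).
Proof.
case=> a10 C10 x0 xl [a20 C20 y0 yl]; split; rewrite ?addr_ge0 //.
rewrite mulrDl mulrDl addrACA; exact: lerD.
Qed.

Lemma good_mul (R : realFieldType) (eps a1 C1 x a2 C2 y : R) :
  0 <= eps -> eps <= 1 ->
  good eps a1 C1 x -> good eps a2 C2 y ->
  good eps a1 (C1 + (a1 + C1) * (a2 + C2)) (x * (1 + y)).
Proof.
move=> e0 e1 [a10 C10 x0 xl] [a20 C20 y0 yl].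
have ee : eps ^+ 2 <= eps by rewrite expr2 ler_piMr.
have xb : x <= (a1 + C1) * eps.
  by apply: (le_trans xl); rewrite mulrDl lerD2l ler_wpM2l.
have yb : y <= (a2 + C2) * eps.
  by apply: (le_trans yl); rewrite mulrDl lerD2l ler_wpM2l.
have xy : x * y <= (a1 + C1) * (a2 + C2) * eps ^+ 2.
  have -> : (a1 + C1) * (a2 + C2) * eps ^+ 2 = ((a1 + C1) * eps) * ((a2 + C2) * eps).
    by rewrite expr2; ring.
  by apply: ler_pM.
have -> : x * (1 + y) = x + x * y by ring.
split=> //; last lra.
  by apply: addr_ge0 => //; apply: mulr_ge0; apply: addr_ge0.
by apply: addr_ge0 => //; apply: mulr_ge0.
Qed.

Lemma good_weak (R : realFieldType) (eps a C x a' : R) : 0 <= eps ->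
  good eps a C x -> a <= a' -> x <= a' * eps + C * eps ^+ 2.
Proof.
move=> e0 [_ _ _ xl] aa; apply: (le_trans xl); rewrite lerD2r.
exact: ler_wpM2r.
Qed.

Definition fo1 (R : realFieldType) (gam bet alp K eps : R) :=
  let eg := gam * eps + K * eps ^+ 2 in
  let eb := bet * eps + K * eps ^+ 2 in
  let ea := alp * eps + K * eps ^+ 2 in
  ((ea * (1 + eg)) * (1 + eb)) * (1 + eps) +
  (eg * (1 + eb) + eb + (eps * (1 + eg)) * (1 + eb)).

Definition fo2 (R : realFieldType) (gam bet alp K eps : R) :=
  fo1 gam bet alp K eps + eps * (1 + fo1 gam bet alp K eps).

Definition fo3 (R : realFieldType) (betn K eps : R) :=
  let ebn := betn * eps + K * eps ^+ 2 in
  ebn + eps * (1 + ebn) + (eps * (1 + eps)) * (1 + ebn).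

Ltac nonneg := repeat first [ done | apply: addr_ge0 | apply: mulr_ge0 ].

Lemma fo1_bound (R : realFieldType) (gam bet alp K : R) :
  0 <= gam -> 0 <= bet -> 0 <= alp -> 0 <= K ->
  exists C : R, 0 <= C /\ forall eps : R, 0 <= eps -> eps <= 1 ->
   0 <= fo1 gam bet alp K eps /\
   fo1 gam bet alp K eps <= (gam + bet + alp + 1) * eps + C * eps ^+ 2.
Proof.
move=> g0 b0 a0 K0.
have H := fun eps (e0 : 0 <= eps) (e1 : eps <= 1) =>
  good_add
   (good_mul e0 e1 (good_mul e0 e1 (good_mul e0 e1 (good_lin e0 a0 K0) (good_lin e0 g0 K0))
        (good_lin e0 b0 K0)) (good_eps e0))
   (good_add (good_add (good_mul e0 e1 (good_lin e0 g0 K0) (good_lin e0 b0 K0)) (good_lin e0 b0 K0))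
      (good_mul e0 e1 (good_mul e0 e1 (good_eps e0) (good_lin e0 g0 K0)) (good_lin e0 b0 K0))).
eexists; split; last first.
  move=> eps e0 e1; have Hg := H eps e0 e1; split; first by case: Hg.
  apply: (good_weak e0 Hg); lra.
nonneg.
Qed.

Lemma fo23_bound (R : realFieldType) (gam bet alp betn K : R) :
  0 <= gam -> 0 <= bet -> 0 <= alp -> 0 <= betn -> 0 <= K ->
  exists C : R, 0 <= C /\ forall eps : R, 0 <= eps -> eps <= 1 ->
   fo2 gam bet alp K eps <= (gam + bet + alp + 1 + 1) * eps + C * eps ^+ 2 /\
   fo3 betn K eps <= (betn + 1 + 1) * eps + C * eps ^+ 2.
Proof.
move=> g0 b0 a0 bn0 K0.
have H := fun eps (e0 : 0 <= eps) (e1 : eps <= 1) =>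
  good_add
   (good_mul e0 e1 (good_mul e0 e1 (good_lin e0 a0 K0) (good_lin e0 g0 K0))
        (good_lin e0 b0 K0)) (good_eps e0).
have H1 := fun eps (e0 : 0 <= eps) (e1 : eps <= 1) =>
  good_add
   (good_mul e0 e1 (good_mul e0 e1 (good_mul e0 e1 (good_lin e0 a0 K0) (good_lin e0 g0 K0))
        (good_lin e0 b0 K0)) (good_eps e0))
   (good_add (good_add (good_mul e0 e1 (good_lin e0 g0 K0) (good_lin e0 b0 K0)) (good_lin e0 b0 K0))
      (good_mul e0 e1 (good_mul e0 e1 (good_eps e0) (good_lin e0 g0 K0)) (good_lin e0 b0 K0))).
have H2 := fun eps (e0 : 0 <= eps) (e1 : eps <= 1) =>
  good_add (H1 eps e0 e1) (good_mul e0 e1 (good_eps e0) (H1 eps e0 e1)).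
have H3 := fun eps (e0 : 0 <= eps) (e1 : eps <= 1) =>
  good_add (good_add (good_lin e0 bn0 K0) (good_mul e0 e1 (good_eps e0) (good_lin e0 bn0 K0)))
    (good_mul e0 e1 (good_mul e0 e1 (good_eps e0) (good_eps e0)) (good_lin e0 bn0 K0)).
clear H.
have [C2 [C20 HC2]] : exists C : R, 0 <= C /\ forall eps : R, 0 <= eps -> eps <= 1 ->
   fo2 gam bet alp K eps <= (gam + bet + alp + 1 + 1) * eps + C * eps ^+ 2.
  eexists; split; last first.
    move=> eps e0 e1; have Hg := H2 eps e0 e1.
    apply: (good_weak e0 Hg); lra.
  nonneg.
have [C3 [C30 HC3]] : exists C : R, 0 <= C /\ forall eps : R, 0 <= eps -> eps <= 1 ->
   fo3 betn K eps <= (betn + 1 + 1) * eps + C * eps ^+ 2.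
  eexists; split; last first.
    move=> eps e0 e1; have Hg := H3 eps e0 e1.
    apply: (good_weak e0 Hg); lra.
  nonneg.
exists (C2 + C3); split; first by nonneg.
move=> eps e0 e1; have e2 : 0 <= eps ^+ 2 by rewrite exprn_ge0.
have := HC2 eps e0 e1; have := HC3 eps e0 e1.
have : C2 * eps ^+ 2 <= (C2 + C3) * eps ^+ 2 by rewrite ler_wpM2r // lerDl.
have : C3 * eps ^+ 2 <= (C2 + C3) * eps ^+ 2 by rewrite ler_wpM2r // lerDr.
move=> *; split; lra.
Qed.

Lemma elem_err (R : realFieldType) (u g v b w Gh Bx eg eb eps : R) :
  0 <= eps -> 0 <= eg -> 0 <= eb ->
  `|u - g| <= Gh * eg -> `|v - b| <= Bx * eb -> `|w - u * v| <= eps * `|u * v| ->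
  `|g| <= Gh -> `|b| <= Bx ->
  `|w - g * b| <= Gh * Bx * (eg * (1 + eb) + eb + (eps * (1 + eg)) * (1 + eb)) /\
  `|w| <= Gh * Bx * (((1 + eg) * (1 + eb)) * (1 + eps)).
Proof.
move=> e0 eg0 eb0 hu hv hw hg hb.
have Gh0 : 0 <= Gh by apply: le_trans hg.
have Bx0 : 0 <= Bx by apply: le_trans hb.
have hU : `|u| <= Gh * (1 + eg).
  have -> : u = g + (u - g) by ring.
  by apply: (le_trans (ler_normD _ _)); rewrite mulrDr mulr1 lerD.
have hV : `|v| <= Bx * (1 + eb).
  have -> : v = b + (v - b) by ring.
  by apply: (le_trans (ler_normD _ _)); rewrite mulrDr mulr1 lerD.
have hUV : `|u * v| <= Gh * (1 + eg) * (Bx * (1 + eb)).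
  by rewrite normrM; apply: ler_pM.
have hd : `|u * v - g * b| <= Gh * eg * (Bx * (1 + eb)) + Gh * (Bx * eb).
  have -> : u * v - g * b = (u - g) * v + g * (v - b) by ring.
  apply: (le_trans (ler_normD _ _)); rewrite !normrM; apply: lerD; exact: ler_pM.
split.
  have -> : w - g * b = (w - u * v) + (u * v - g * b) by ring.
  apply: (le_trans (ler_normD _ _)).
  have : eps * `|u * v| <= eps * (Gh * (1 + eg) * (Bx * (1 + eb))) by rewrite ler_wpM2l.
  move=> h1.
  have -> : Gh * Bx * (eg * (1 + eb) + eb + eps * (1 + eg) * (1 + eb)) =
     eps * (Gh * (1 + eg) * (Bx * (1 + eb))) + (Gh * eg * (Bx * (1 + eb)) + Gh * (Bx * eb)) by ring.
  exact: lerD (le_trans hw h1) hd.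
have -> : w = (w - u * v) + u * v by ring.
apply: (le_trans (ler_normD _ _)).
have : eps * `|u * v| <= eps * (Gh * (1 + eg) * (Bx * (1 + eb))) by rewrite ler_wpM2l.
move=> h1.
have -> : Gh * Bx * ((1 + eg) * (1 + eb) * (1 + eps)) =
     eps * (Gh * (1 + eg) * (Bx * (1 + eb))) + Gh * (1 + eg) * (Bx * (1 + eb)) by ring.
exact: lerD (le_trans hw h1) hUV.
Qed.
Lemma dotE (R : pzRingType) k (a : 'rV[R]_k) (y : 'cV[R]_k) :
  (a *m y) 0 0 = \sum_i a 0 i * y i 0.
Proof. by rewrite mxE. Qed.

Lemma abs_dot (R : realFieldType) k (a : 'rV[R]_k) (y : 'cV[R]_k) :
  `|(a *m y) 0 0| <= (absm a *m absm y) 0 0.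
Proof.
rewrite !dotE; apply: le_trans (ler_norm_sum _ _ _) _.
by apply: ler_sum => i _; rewrite !mxE normrM.
Qed.

Lemma lift_max_widen m (i : 'I_m) : lift ord_max i = widen_ord (leqnSn m) i.
Proof. by apply: val_inj; rewrite /= /bump leqNgt ltn_ord. Qed.

Lemma Gm_lift (R : fieldType) nh m (p : 'I_m -> R) (h : 'cV[R]_nh) i :
  (TC_Gm nh p *m h) (lift ord_max i) 0 = (row i (TC_G nh p) *m h) 0 0.
Proof. by rewrite !mxE; apply: eq_bigr => j _; rewrite !mxE liftK /TC_G !mxE. Qed.

Lemma Gm_max (R : fieldType) nh m (p : 'I_m -> R) (h : 'cV[R]_nh) (hl : 'I_nh) :
  (hl : nat) = nh.-1 -> (TC_Gm nh p *m h) ord_max 0 = h hl 0.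
Proof.
move=> hle; rewrite mxE (bigD1 hl) //= big1 ?addr0.
  by rewrite mxE unlift_none hle eqxx mul1r.
move=> j jn; rewrite mxE unlift_none.
have : (j : nat) != nh.-1 by rewrite -hle; apply: contra jn => /eqP e; apply/eqP/val_inj.
by move/negbTE => ->; rewrite mul0r.
Qed.

Lemma BTm_lift (R : fieldType) m (p : 'I_m -> R) (x : 'cV[R]_m.+1) i :
  (TC_BTm p *m x) (lift ord_max i) 0 = (row i (TC_BT p) *m xtrunc x) 0 0.
Proof.
rewrite !mxE big_ord_recr /= mxE liftK unlift_none mul0r addr0.
by apply: eq_bigr => j _; rewrite !mxE -lift_max_widen (liftK (ord_max : 'I_m.+1) j) liftK /TC_BT mxE.
Qed.

Lemma BTm_max (R : fieldType) m (p : 'I_m -> R) (x : 'cV[R]_m.+1) :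
  (TC_BTm p *m x) ord_max 0 = (row ord_max (TC_BTm p) *m x) 0 0.
Proof. by rewrite !mxE; apply: eq_bigr => j _; rewrite [row _ _ _ _]mxE. Qed.

Definition zc (R : fieldType) nh m (p : 'I_m -> R) (h : 'cV[R]_nh) (x : 'cV[R]_m.+1) :
  'cV[R]_m :=
  \col_i ((row i (TC_G nh p) *m h) 0 0 * (row i (TC_BT p) *m xtrunc x) 0 0).

Lemma exact_split (R : fieldType) no nh m (p : 'I_m -> R) (h : 'cV[R]_nh)
  (x : 'cV[R]_m.+1) (hl : 'I_nh) (q : 'I_no) : (hl : nat) = nh.-1 ->
  TC_exact no p h x q 0 = (row q (TC_AT no p) *m zc p h x) 0 0 +
     (((q : nat) == no.-1) : nat)%:R * (h hl 0 * (row ord_max (TC_BTm p) *m x) 0 0).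
Proof.
move=> hle; rewrite /TC_exact mxE big_ord_recr /=; congr (_ + _).
  rewrite mxE; apply: eq_bigr => i _.
  rewrite -lift_max_widen [TC_ATm _ _ _ _]mxE [hadc _ _ _ _]mxE Gm_lift BTm_lift.
  by rewrite (liftK (ord_max : 'I_m.+1) i) [row _ _ _ _]mxE [zc _ _ _ _ _]mxE.
by rewrite [TC_ATm _ _ _ _]mxE [hadc _ _ _ _]mxE unlift_none (Gm_max p h hle) BTm_max.
Qed.

Definition Mv (R : realFieldType) nh m (p : 'I_m -> R) (h : 'cV[R]_nh) (x : 'cV[R]_m.+1) i :=
  (absm (row i (TC_G nh p)) *m absm h) 0 0 *
  (absm (row i (TC_BT p)) *m absm (xtrunc x)) 0 0.

Lemma mainterm_eq (R : realFieldType) no nh m (p : 'I_m -> R) (h : 'cV[R]_nh)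
  (x : 'cV[R]_m.+1) (q : 'I_no) :
  TC_mainterm p h x q = \sum_i `|TC_AT no p q i| * Mv p h x i.
Proof.
rewrite /TC_mainterm mxE; apply: eq_bigr => i _.
rewrite [absm _ 0 i]mxE [row _ _ 0 i]mxE [hadc _ _ _ _]mxE /Mv.
congr (_ * (_ * _)).
  by rewrite !mxE; apply: eq_bigr => j _; rewrite !mxE.
by rewrite !mxE; apply: eq_bigr => j _; rewrite !mxE.
Qed.

Lemma S1_err (R : realFieldType) no nh m (p : 'I_m -> R) (gam bet alp K eps : R)
 (F : R -> Prop) (fl_mul : R -> R -> R) (fdot : fdot_type R) (h : 'cV[R]_nh)
 (x : 'cV[R]_m.+1) (q : 'I_no) :
 0 <= eps -> 0 <= gam -> 0 <= bet -> 0 <= alp -> 0 <= K ->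
 (forall y z, `|fl_mul y z - y * z| <= eps * `|y * z|) ->
 (forall y z, F (fl_mul y z)) ->
 (forall i, dot_err_bound F fdot eps K gam (row i (TC_G nh p))) ->
 (forall i, dot_err_bound F fdot eps K bet (row i (TC_BT p))) ->
 (forall i, dot_err_bound F fdot eps K alp (row i (TC_AT no p))) ->
 (forall j, F (h j 0)) -> (forall j, F (x j 0)) ->
 `|fdot _ (row q (TC_AT no p)) (TC_w fdot fl_mul p h x) - (row q (TC_AT no p) *m zc p h x) 0 0|
   <= TC_mainterm p h x q * fo1 gam bet alp K eps /\
 `|(row q (TC_AT no p) *m zc p h x) 0 0| <= TC_mainterm p h x q.
Proof.
move=> e0 g0 b0 a0 K0 hmul Fmul hG hB hA Fh Fx.
have e2 : 0 <= eps ^+ 2 by rewrite exprn_ge0.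
set eg := gam * eps + K * eps ^+ 2.
set eb := bet * eps + K * eps ^+ 2.
set ea := alp * eps + K * eps ^+ 2.
have eg0 : 0 <= eg by rewrite /eg addr_ge0 ?mulr_ge0.
have eb0 : 0 <= eb by rewrite /eb addr_ge0 ?mulr_ge0.
have ea0 : 0 <= ea by rewrite /ea addr_ge0 ?mulr_ge0.
set w := TC_w fdot fl_mul p h x.
have Fxt : forall j, F (xtrunc x j 0) by move=> j; rewrite mxE.
have per : forall i,
  `|w i 0 - zc p h x i 0| <= Mv p h x i * (eg * (1 + eb) + eb + (eps * (1 + eg)) * (1 + eb)) /\
  `|w i 0| <= Mv p h x i * (((1 + eg) * (1 + eb)) * (1 + eps)).
  move=> i; rewrite /w /Mv [TC_w _ _ _ _ _ _ _]mxE [zc _ _ _ _ _]mxE.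
  apply: elem_err => //.
  - by rewrite distrC; apply: hG.
  - by rewrite distrC; apply: hB.
  - exact: abs_dot.
  - exact: abs_dot.
have Mv0 : forall i, 0 <= Mv p h x i.
  by move=> i; rewrite /Mv; apply: mulr_ge0; apply: le_trans (abs_dot _ _); rewrite normr_ge0.
have zcb : forall i, `|zc p h x i 0| <= Mv p h x i.
  by move=> i; rewrite mxE /Mv normrM; apply: ler_pM => //; apply: abs_dot.
rewrite mainterm_eq.
split; last first.
  rewrite dotE; apply: le_trans (ler_norm_sum _ _ _) _.
  by apply: ler_sum => i _; rewrite normrM mxE ler_wpM2l.
have hAq := hA q w (fun j => ltac:(rewrite mxE; apply: Fmul)).
set a := row q (TC_AT no p) in hAq *.
set M := \sum_i _.
have SwB : (absm a *m absm w) 0 0 <= M * (((1 + eg) * (1 + eb)) * (1 + eps)).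
  rewrite /M mulr_suml; rewrite mxE; apply: ler_sum => i _.
  rewrite !mxE -mulrA; apply: ler_wpM2l => //.
  by have := proj2 (per i); rewrite /w mxE.
have DB : `|(a *m w) 0 0 - (a *m zc p h x) 0 0| <=
    M * (eg * (1 + eb) + eb + (eps * (1 + eg)) * (1 + eb)).
  rewrite !dotE -sumrB; apply: le_trans (ler_norm_sum _ _ _) _.
  rewrite /M mulr_suml; apply: ler_sum => i _.
  rewrite -mulrBr normrM -mulrA [a 0 i]mxE ler_wpM2l //; exact: (proj1 (per i)).
have SwB' : (absm a *m absm w) 0 0 * ea <= M * (((1 + eg) * (1 + eb)) * (1 + eps)) * ea.
  by apply: ler_wpM2r.
have -> : fdot _ a w - (a *m zc p h x) 0 0 =
   - ((a *m w) 0 0 - fdot _ a w) + ((a *m w) 0 0 - (a *m zc p h x) 0 0) by ring.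
apply: (le_trans (ler_normD _ _)); rewrite normrN.
have -> : M * fo1 gam bet alp K eps =
   M * ((1 + eg) * (1 + eb) * (1 + eps)) * ea +
   M * (eg * (1 + eb) + eb + eps * (1 + eg) * (1 + eb)) by rewrite /fo1 /eg /eb /ea; ring.
apply: lerD => //; exact: le_trans hAq SwB'.
Qed.

Lemma mainterm_ge0 (R : realFieldType) no nh m (p : 'I_m -> R) (h : 'cV[R]_nh)
  (x : 'cV[R]_m.+1) (q : 'I_no) : 0 <= TC_mainterm p h x q.
Proof.
rewrite mainterm_eq; apply: sumr_ge0 => i _; apply: mulr_ge0 => //.
by rewrite /Mv; apply: mulr_ge0; apply: le_trans (abs_dot _ _); rewrite normr_ge0.
Qed.

Theorem mainTheorem5 (R : realFieldType) (nh no : nat)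
    (p : 'I_(no + nh - 2) -> R) (gam bet alp betn K : R) :
  (1 <= nh)%N -> (2 <= no)%N -> injective p ->
  0 <= gam -> 0 <= bet -> 0 <= alp -> 0 <= betn -> 0 <= K ->
  exists C eps0 : R, 0 < eps0 /\
  forall eps : R, 0 <= eps -> eps <= eps0 ->
  forall (F : R -> Prop) (fl_mul fl_add : R -> R -> R) (fdot : fdot_type R),
    (* floating point model *)
    (forall y z, `|fl_mul y z - y * z| <= eps * `|y * z|) ->
    (forall y z, `|fl_add y z - (y + z)| <= eps * `|y + z|) ->
    (forall y z, F (fl_mul y z)) -> (forall y z, F (fl_add y z)) ->
    (forall k a y, F (fdot k a y)) ->
    (* the error constants gamma^(nh), beta^(n-1), alpha^(n-1), beta^(n) *)
    (forall i, dot_err_bound F fdot eps K gam (row i (TC_G nh p))) ->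
    (forall i, dot_err_bound F fdot eps K bet (row i (TC_BT p))) ->
    (forall i, dot_err_bound F fdot eps K alp (row i (TC_AT no p))) ->
    dot_err_bound F fdot eps K betn (row ord_max (TC_BTm p)) ->
  forall (h : 'cV[R]_nh) (x : 'cV[R]_((no + nh - 2).+1)),
    (forall j, F (h j 0)) -> (forall j, F (x j 0)) ->
  forall hl : 'I_nh, (hl : nat) = nh.-1 ->
    (forall q : 'I_no, ((q : nat) < no.-1)%N ->
      `|TC_shat fdot fl_mul fl_add p h x hl q - TC_exact no p h x q 0|
        <= TC_mainterm p h x q * ((gam + bet + alp + 1) * eps)
           + C * eps ^+ 2 * TC_mainterm p h x q) /\
    (forall q : 'I_no, (q : nat) = no.-1 ->
      let M := TC_mainterm p h x q
               + `|h hl 0| * (absm (row ord_max (TC_BTm p)) *m absm x) 0 0 in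
      `|TC_shat fdot fl_mul fl_add p h x hl q - TC_exact no p h x q 0|
        <= M * ((Num.max (gam + bet + alp + 1) (betn + 1) + 1) * eps)
           + C * eps ^+ 2 * M).
Proof.
move=> nh1 no2 injp g0 b0 a0 bn0 K0.
have [C1 [C10 HC1]] := fo1_bound g0 b0 a0 K0.
have [C2 [C20 HC2]] := fo23_bound g0 b0 a0 bn0 K0.
exists (C1 + C2), 1; split; first by rewrite ltr01.
move=> eps e0 e1 F fl_mul fl_add fdot hmul hadd Fmul Fadd Fdot hG hB hA hBn h x Fh Fx hl hle.
have e2 : 0 <= eps ^+ 2 by rewrite exprn_ge0.
split.
  move=> q qlt.
  have [S1 _] := S1_err q e0 g0 b0 a0 K0 hmul Fmul hG hB hA Fh Fx.
  rewrite /TC_shat qlt (exact_split _ _ _ _ hle).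
  have -> : ((q : nat) == no.-1) = false by apply/negbTE; rewrite neq_ltn qlt.
  rewrite mul0r addr0.
  set M := TC_mainterm p h x q in S1 *.
  have M0 : 0 <= M by apply: mainterm_ge0.
  have [_ H1] := HC1 eps e0 e1.
  have : M * fo1 gam bet alp K eps <= M * ((gam + bet + alp + 1) * eps + C1 * eps ^+ 2).
    by rewrite ler_wpM2l.
  have : C1 * eps ^+ 2 * M <= (C1 + C2) * eps ^+ 2 * M.
    by rewrite ler_wpM2r // ler_wpM2r // lerDl.
  move=> *; nra.
move=> q qe /=.
have [S1 s1b] := S1_err q e0 g0 b0 a0 K0 hmul Fmul hG hB hA Fh Fx.
rewrite /TC_shat qe ltnn (exact_split _ _ _ _ hle) qe eqxx mul1r.
set Mt := TC_mainterm p h x q in S1 s1b *.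
have M0 : 0 <= Mt by apply: mainterm_ge0.
set a := row q (TC_AT no p) in S1 s1b *.
set w := TC_w fdot fl_mul p h x in S1 *.
set s1 := (a *m zc p h x) 0 0 in S1 s1b *.
set S := fdot _ a w in S1 *.
set bm := row ord_max (TC_BTm p) in hBn *.
set tb := fdot _ bm x.
set t := (bm *m x) 0 0.
set Bm := (absm bm *m absm x) 0 0.
set H := `|h hl 0|.
set ebn := betn * eps + K * eps ^+ 2.
set phi := fo1 gam bet alp K eps in S1.
have H0 : 0 <= H by rewrite normr_ge0.
have Bm0 : 0 <= Bm by apply: le_trans (abs_dot bm x); rewrite normr_ge0.
have ebn0 : 0 <= ebn by rewrite addr_ge0 ?mulr_ge0.
have phi0 : 0 <= phi by case: (HC1 eps e0 e1).
have f3 : `|tb - t| <= Bm * ebn by rewrite distrC; apply: hBn.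
have f4 : `|t| <= Bm by apply: abs_dot.
have ftb : `|tb| <= Bm * (1 + ebn).
  have -> : tb = t + (tb - t) by ring.
  by apply: (le_trans (ler_normD _ _)); rewrite mulrDr mulr1 lerD.
set U := `|h hl 0 * tb|.
have hU : U <= H * (Bm * (1 + ebn)) by rewrite /U normrM ler_wpM2l.
have U0 : 0 <= U by rewrite normr_ge0.
set T := fl_mul (h hl 0) tb.
have f5 : `|T - h hl 0 * tb| <= eps * U by apply: hmul.
have hT : `|T| <= U + eps * U.
  have -> : T = h hl 0 * tb + (T - h hl 0 * tb) by ring.
  by apply: (le_trans (ler_normD _ _)); rewrite lerD.
have hS : `|S| <= Mt + Mt * phi.
  have -> : S = s1 + (S - s1) by ring.
  by apply: (le_trans (ler_normD _ _)); rewrite lerD.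
have f6 : `|fl_add S T - (S + T)| <= eps * `|S + T| by apply: hadd.
have hST : `|S + T| <= Mt + Mt * phi + (U + eps * U) by apply: (le_trans (ler_normD _ _)); rewrite lerD.
have hTt : `|T - h hl 0 * t| <= eps * U + H * (Bm * ebn).
  have -> : T - h hl 0 * t = (T - h hl 0 * tb) + h hl 0 * (tb - t) by ring.
  apply: (le_trans (ler_normD _ _)); rewrite lerD // normrM ler_wpM2l //.
have tot : `|fl_add S T - (s1 + h hl 0 * t)| <=
    eps * (Mt + Mt * phi + (U + eps * U)) + (Mt * phi + (eps * U + H * (Bm * ebn))).
  have -> : fl_add S T - (s1 + h hl 0 * t) =
     (fl_add S T - (S + T)) + ((S - s1) + (T - h hl 0 * t)) by ring.
  apply: (le_trans (ler_normD _ _)); apply: lerD.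
    by apply: (le_trans f6); rewrite ler_wpM2l.
  by apply: (le_trans (ler_normD _ _)); rewrite lerD.
have eU : eps * U <= eps * (H * (Bm * (1 + ebn))) by rewrite ler_wpM2l.
have eeU : eps * (eps * U) <= eps * (eps * (H * (Bm * (1 + ebn)))) by rewrite !ler_wpM2l.
have tot2 : `|fl_add S T - (s1 + h hl 0 * t)| <=
    Mt * fo2 gam bet alp K eps + H * Bm * fo3 betn K eps.
  apply: (le_trans tot).
  have -> : Mt * fo2 gam bet alp K eps + H * Bm * fo3 betn K eps =
    eps * (Mt + Mt * phi + (H * (Bm * (1 + ebn)) + eps * (H * (Bm * (1 + ebn))))) +
    (Mt * phi + (eps * (H * (Bm * (1 + ebn))) + H * (Bm * ebn))).
    by rewrite /fo2 /fo3 /phi /ebn; ring.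
  have : eps * U <= eps * (H * (Bm * (1 + ebn))) by [].
  move=> _; lra.
apply: (le_trans tot2).
have [B2 B3] := HC2 eps e0 e1.
set mx := Num.max _ _.
have m1 : gam + bet + alp + 1 <= mx by rewrite le_max lexx.
have m2 : betn + 1 <= mx by rewrite le_max lexx orbT.
have HB0 : 0 <= H * Bm by rewrite mulr_ge0.
have k1 : Mt * fo2 gam bet alp K eps <= Mt * ((mx + 1) * eps + C2 * eps ^+ 2).
  rewrite ler_wpM2l //; apply: (le_trans B2); rewrite lerD2r ler_wpM2r //; lra.
have k2 : H * Bm * fo3 betn K eps <= H * Bm * ((mx + 1) * eps + C2 * eps ^+ 2).
  rewrite ler_wpM2l //; apply: (le_trans B3); rewrite lerD2r ler_wpM2r //; lra.
have k3 : C2 * eps ^+ 2 * (Mt + H * Bm) <= (C1 + C2) * eps ^+ 2 * (Mt + H * Bm).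
  by rewrite ler_wpM2r ?addr_ge0 // ler_wpM2r // lerDr.
nra.
Qed.
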